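(* Suppose that there exist a cyclic HDM$(k,n;h)$, a cyclic DM$(n',k;1)$, and a cyclic DCA$(k,hn'+1;hn')$ satisfying P1 and P2. Then there exists a cyclic DCA$(k,nn'+1;nn')$ satisfying P1 and P2.
   Context: A difference matrix DM$(n,k;\lambda)$ over an abelian group $(G,+)$ of order $n$ is an $n\times k$ matrix $Q=[q(i,j)]$ with entries in $G$ such that for every pair of distinct columns $j,j'$ the multiset $\{q(i,j)-q(i,j') : 0\le i\le n-1\}$ contains every element of $G$ exactly $\lambda$ times. A holey difference matrix HDM$(k,n;h)$ over $G$ with hole a subgroup $H$ of order $h$ is an $(n-h)\times k$ matrix with entries in $G$ such that for every pair of distinct columns the multiset of row differences contains every element of $G\setminus H$ exactly once. A difference covering array DCA$(k,\eta;n)$ over $G$ is an $\eta\times k$ matrix with entries in $G$ such that for every pair of distinct columns $j,j'$ the multiset of row differences $q(i,j)-q(i,j')$ contains every element of $G$ at least once. Any of these is cyclic if $G=\mathbb{Z}_n$. A DCA$(k,n+1;n)$ is taken in normalized form: all entries of its last row (row $n$) and last column (column $k-1$) equal $0$. It satisfies P1 if $0$ occurs at least twice in every column, and P2 if for all distinct columns $j,j'$ with $j\neq k-1\neq j'$, the set $\{q(i,j)-q(i,j') : 0\le i\le n-1\}$ equals $G\setminus\{0\}$. *)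

(* Defs.v *)
(* The cyclic group Z_m (m >= 1) is modelled by the
   residues {0,...,m-1} in nat with subtraction modulo m.  A matrix with
   r rows and c columns is a function Q : nat -> nat -> nat, of which only
   the entries Q i j with i < r, j < c matter. *)
From mathcomp Require Import all_boot.
Set Implicit Arguments. Unset Strict Implicit. Unset Printing Implicit Defensive.

(* a - b in Z_m, for residues a b < m *)
Definition zsub (m a b : nat) : nat := (a + (m - b)) %% m.

Definition entries_in (m r c : nat) (Q : nat -> nat -> nat) : Prop :=
  forall i j, i < r -> j < c -> Q i j < m.

Definition diff_count (m r : nat) (Q : nat -> nat -> nat) (j j' g : nat) : nat :=
  count (fun i => zsub m (Q i j) (Q i j') == g) (iota 0 r).

Definition is_cyclic_DM (m k lam : nat) (Q : nat -> nat -> nat) : Prop :=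
  entries_in m m k Q /\
  forall j j', j < k -> j' < k -> j != j' ->
    forall g, g < m -> diff_count m m Q j j' g = lam.

(* the subgroup of Z_m of order h (h %| m): the multiples of m %/ h *)
Definition in_hole (m h g : nat) : bool := (m %/ h) %| g.

Definition is_cyclic_HDM (k m h : nat) (Q : nat -> nat -> nat) : Prop :=
  0 < h /\ h %| m /\
  entries_in m (m - h) k Q /\
  forall j j', j < k -> j' < k -> j != j' ->
    forall g, g < m -> diff_count m (m - h) Q j j' g = (if in_hole m h g then 0 else 1).

Definition is_cyclic_DCA (k eta m : nat) (Q : nat -> nat -> nat) : Prop :=
  entries_in m eta k Q /\
  forall j j', j < k -> j' < k -> j != j' ->
    forall g, g < m -> 0 < diff_count m eta Q j j' g.

Definition normalized (k m : nat) (Q : nat -> nat -> nat) : Prop :=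
  (forall j, j < k -> Q m j = 0) /\
  (forall i j, i <= m -> j.+1 = k -> Q i j = 0).

Definition P1 (k m : nat) (Q : nat -> nat -> nat) : Prop :=
  forall j, j < k -> 2 <= count (fun i => Q i j == 0) (iota 0 m.+1).

Definition P2 (k m : nat) (Q : nat -> nat -> nat) : Prop :=
  forall j j', j.+1 < k -> j'.+1 < k -> j != j' ->
    forall g, g < m -> (0 < diff_count m m Q j j' g <-> g != 0).

Definition good_DCA (k m : nat) (Q : nat -> nat -> nat) : Prop :=
  is_cyclic_DCA k m.+1 m Q /\ normalized k m Q /\ P1 k m Q /\ P2 k m Q.

(* Main.v *)
Require Import Defs.
From mathcomp Require Import all_boot zify.

Lemma zsubE m a b : b <= m -> b + zsub m a b = a %[mod m].
Proof.
move=> bm; rewrite /zsub modnDmr addnA (addnC b) -addnA subnKC //.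
by rewrite modnDr.
Qed.

Lemma zsub_lt m a b : 0 < m -> zsub m a b < m.
Proof. by move=> m0; rewrite /zsub ltn_pmod. Qed.

Lemma zsub_eq m a b c : 0 < m -> b <= m ->
  (zsub m a b == c) = (c < m) && (b + c == a %[mod m]).
Proof.
move=> m0 bm; apply/idP/idP.
  by move/eqP<-; rewrite zsub_lt //= zsubE.
case/andP=> cm /eqP H; apply/eqP.
have : b + zsub m a b = b + c %[mod m] by rewrite zsubE // H.
move/eqP; rewrite eqn_modDl => /eqP.
by rewrite !modn_small // zsub_lt.
Qed.

Lemma zsub_shift m x y z : 0 < m -> x < m -> y < m -> z < m ->
  zsub m (zsub m x z) (zsub m y z) = zsub m x y.
Proof.
move=> m0 xm ym zm; apply/eqP; rewrite zsub_eq ?zsub_lt //; last by apply: ltnW; rewrite zsub_lt.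
rewrite -(eqn_modDl z) addnA -modnDml zsubE ?(ltnW zm) // modnDml.
rewrite -modnDml zsubE ?(ltnW zm) // modnDml zsubE ?(ltnW ym) //.
by rewrite eqxx.
Qed.

Lemma zsub_xx m x : x <= m -> zsub m x x = 0.
Proof. by move=> xm; rewrite /zsub subnKC // modnn. Qed.

Lemma count_iota_mul (P : pred nat) a c :
  count P (iota 0 (a * c)) =
  sumn [seq count (fun s => P (r * c + s)) (iota 0 c) | r <- iota 0 a].
Proof.
elim: a => [|a IH]; first by [].
rewrite mulSnr iotaD count_cat IH -[a.+1]addn1 iotaD map_cat sumn_cat /=.
by rewrite add0n addn0 -{1}[a * c]addn0 iotaDl count_map.
Qed.

Lemma eqn_mod_pmul2l n x y m : 0 < n ->
  (n * x == n * y %[mod n * m]) = (x == y %[mod m]).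
Proof. by move=> n0; rewrite -!muln_modr eqn_pmul2l. Qed.

Lemma modnDMr n u v : u + n * v = u %[mod n].
Proof. by rewrite mulnC addnC modnMDl. Qed.

Lemma prod_count n n' (D : nat -> nat -> nat) k j j' a a' g :
  0 < n -> 0 < n' -> is_cyclic_DM n' k 1 D -> j < k -> j' < k -> j != j' ->
  a < n -> a' < n -> g < n * n' ->
  count (fun s => zsub (n*n') (a + n * D s j) (a' + n * D s j') == g) (iota 0 n')
  = (zsub n a a' == g %% n).
Proof.
move=> n0 n'0 [DE DD] jk j'k jj' an a'n gN.
have N0 : 0 < n * n' by rewrite muln_gt0 n0.
have bnd : forall s, s < n' -> a' + n * D s j' <= n * n'.
  by move=> s sn; have := DE s j' sn j'k; nia.
case E: (zsub n a a' == g %% n).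
  have H0 : a' + g %% n = a %[mod n].
    by move: E; rewrite zsub_eq // ?(ltnW a'n) // => /andP[_ /eqP].
  set e := (a' + g %% n) %/ n.
  have He : a' + g %% n = e * n + a.
    by rewrite {1}(divn_eq (a' + g %% n) n) H0 (modn_small an).
  have Hg := divn_eq g n.
  set t := (e + g %/ n) %% n'.
  have tn : t < n' by rewrite ltn_pmod.
  rewrite [RHS]/= -(DD j j' jk j'k jj' t tn) /diff_count.
  apply: eq_in_count => s; rewrite mem_iota add0n => /andP[_ sn].
  rewrite zsub_eq ?bnd // gN /= zsub_eq ?(ltnW (DE s j' sn j'k)) // tn /=.
  have -> : a' + n * D s j' + g = a + n * (D s j' + (e + g %/ n)) by nia.
  by rewrite eqn_modDl eqn_mod_pmul2l // modnDmr.
apply/eqP; rewrite eqn0Ngt -has_count; apply/hasPn => s.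
rewrite mem_iota add0n => /andP[_ sn].
rewrite zsub_eq ?bnd // gN /=; apply/negP => /eqP H.
move/negbT: E => /negP; apply.
rewrite zsub_eq // ?(ltnW a'n) // ltn_pmod //=.
have H2 : a' + n * D s j' + g = a + n * D s j %[mod n].
  by rewrite -(modn_dvdm _ (dvdn_mulr n' (dvdnn n))) H modn_dvdm // dvdn_mulr.
move: H2; rewrite addnAC !modnDMr => H2.
by rewrite modnDmr H2.
Qed.

Lemma eqn_mod_pmul2r n x y m : 0 < n ->
  (x * n == y * n %[mod m * n]) = (x == y %[mod m]).
Proof. by move=> n0; rewrite -!muln_modl eqn_pmul2r. Qed.

Lemma dca_eq M q x y g : 0 < M -> 0 < q -> y < M -> g < M * q ->
 (zsub (M * q) (x * q) (y * q) == g) = (q %| g) && (zsub M x y == g %/ q).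
Proof.
move=> M0 q0 yM gN.
have N0 : 0 < M * q by rewrite muln_gt0 M0.
rewrite zsub_eq // ?leq_mul2r ?(ltnW yM) ?orbT // gN /=.
case: (boolP (q %| g)) => qg /=.
  rewrite -{1}(divnK qg) -mulnDl eqn_mod_pmul2r // zsub_eq ?(ltnW yM) //.
  by rewrite ltn_divLR // gN.
apply/negP => /eqP H; move: qg; rewrite /dvdn; apply/negP; rewrite negbK.
have H2 : (y * q + g) %% q = (x * q) %% q.
  by rewrite -(modn_dvdm (y * q + g) (dvdn_mull M (dvdnn q))) H modn_dvdm // dvdn_mull.
by move: H2; rewrite modnMDl modnMl => ->.
Qed.

Lemma dvdn_modr_iff q n g : q %| n -> (q %| g %% n) = (q %| g).
Proof. by move=> qn; rewrite /dvdn (modn_dvdm g qn). Qed.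

Lemma count_split (p : pred nat) P m :
  count p (iota 0 (P + m)) = count p (iota 0 P) + count (fun i => p (P + i)) (iota 0 m).
Proof.
rewrite iotaD count_cat add0n.
have -> : iota P m = [seq P + i | i <- iota 0 m] by rewrite -iotaDl addn0.
by rewrite count_map.
Qed.

Lemma prod_lt a d n n' : a < n -> d < n' -> a + n * d < n * n'.
Proof. move=> *; nia. Qed.

Theorem mainTheorem7 (k n h n' : nat) :
  0 < n -> 0 < n' ->
  (exists Q, is_cyclic_HDM k n h Q) ->
  (exists Q, is_cyclic_DM n' k 1 Q) ->
  (exists Q, good_DCA k (h * n') Q) ->
  exists Q, good_DCA k (n * n') Q.
Proof.
move=> n0 n'0 [A [h0 [hn [AE AD]]]] [D DM] [C [[CE CD] [[CN1 CN2] [CP1 CP2]]]].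
set q := n %/ h.
have nq : n = q * h by rewrite divnK.
have q0 : 0 < q by move: n0; rewrite nq muln_gt0 => /andP[].
have hle : h <= n by apply: dvdn_leq.
have qn : q %| n by rewrite nq dvdn_mulr.
set M := h * n'.
have M0 : 0 < M by rewrite muln_gt0 h0.
have NM : n * n' = M * q by rewrite /M {1}nq [RHS]mulnC mulnA.
set P := (n - h) * n'.
have PM : P + M = n * n' by rewrite /P /M -mulnDl subnK.
set N := n * n'.
have {}PM : P + M = N := PM.
have N0 : 0 < N by rewrite /N muln_gt0 n0.
pose prodR i j := A (i %/ n') j + n * D (i %% n') j.
pose R i j := if i < P then prodR i j else C (i - P) j * q.
pose Q i j := zsub N (R i j) (R i k.-1).
exists Q.
have RN : forall i j, i <= N -> j < k -> R i j < N.
  move=> i j iN jk; rewrite /R; case: ifP => iP.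
    have rn : i %/ n' < n - h by rewrite ltn_divLR.
    have := AE _ _ rn jk; have := DM.1 (i %% n') j (ltn_pmod _ n'0) jk.
    by move=> *; rewrite /prodR /N prod_lt.
  have iM : i - P < M.+1 by rewrite ltnS leq_subLR PM.
  by rewrite /N NM ltn_mul2r q0 CE.
have Qdiff : forall i j j', i <= N -> j < k -> j' < k ->
    zsub N (Q i j) (Q i j') = zsub N (R i j) (R i j').
  move=> i j j' iN jk j'k; rewrite /Q zsub_shift ?RN //.
  by rewrite prednK // (leq_ltn_trans _ jk).
have prodC : forall j j' g, j < k -> j' < k -> j != j' -> g < N ->
    count (fun i => zsub N (prodR i j) (prodR i j') == g) (iota 0 P) = ~~ (q %| g).
  move=> j j' g jk j'k jj' gN.
  rewrite count_iota_mul.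
  have -> : [seq count (fun s => zsub N (prodR (r * n' + s) j) (prodR (r * n' + s) j') == g)
                 (iota 0 n') | r <- iota 0 (n - h)]
          = [seq nat_of_bool (zsub n (A r j) (A r j') == g %% n) | r <- iota 0 (n - h)].
    apply/eq_in_map => r; rewrite mem_iota add0n => /andP[_ rn].
    rewrite -(@prod_count n n' D k j j' (A r j) (A r j') g n0 n'0 DM jk j'k jj' (AE r j rn jk) (AE r j' rn j'k) gN).
    apply: eq_in_count => s; rewrite mem_iota add0n => /andP[_ sn].
    by rewrite /prodR divnMDl // divn_small // addn0 modnMDl modn_small.
  rewrite (sumn_count (fun r => zsub n (A r j) (A r j') == g %% n)).
  have := AD j j' jk j'k jj' (g %% n) (ltn_pmod _ n0).
  rewrite /diff_count => ->.
  by rewrite /in_hole -/q dvdn_modr_iff //; case: (q %| g).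
have dcaC : forall j j' g m, m <= M.+1 -> j < k -> j' < k -> g < N ->
    count (fun i => zsub N (R (P + i) j) (R (P + i) j') == g) (iota 0 m) =
    if q %| g then count (fun i => zsub M (C i j) (C i j') == g %/ q) (iota 0 m) else 0.
  move=> j j' g m mM jk j'k gN.
  rewrite (eq_in_count (a2 := fun i => (q %| g) && (zsub M (C i j) (C i j') == g %/ q))).
    by case: (q %| g) => //=; elim: (iota 0 m).
  move=> i; rewrite mem_iota add0n => /andP[_ im].
  have iM : i < M.+1 by apply: leq_trans mM.
  rewrite /R ltnNge leq_addr /= addKn /N NM dca_eq // -?NM ?CE //.
have Rform : forall j j' g m, m <= N.+1 -> j < k -> j' < k ->
    count (fun i => zsub N (Q i j) (Q i j') == g) (iota 0 m) =
    count (fun i => zsub N (R i j) (R i j') == g) (iota 0 m).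
  move=> j j' g m mN jk j'k; apply: eq_in_count => i.
  rewrite mem_iota add0n => /andP[_ im].
  by rewrite Qdiff // -ltnS (leq_trans im).
have RP : forall j j' g,
    count (fun i => zsub N (R i j) (R i j') == g) (iota 0 P) =
    count (fun i => zsub N (prodR i j) (prodR i j') == g) (iota 0 P).
  move=> j j' g; apply: eq_in_count => i.
  by rewrite mem_iota add0n => /andP[_ iP]; rewrite /R iP.
have RN0 : forall j, j < k -> R N j = 0.
  by move=> j jk; rewrite /R -PM ltnNge leq_addr /= addKn CN1.
split; [split | split; [split | split]].
- by move=> i j _ _; apply: zsub_lt.
- move=> j j' jk j'k jj' g gN.
  rewrite /diff_count Rform //.
  have -> : iota 0 N.+1 = iota 0 (P + M.+1) by rewrite addnS PM.
  rewrite count_split RP prodC // dcaC //.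
  case: (boolP (q %| g)) => qg //=.
  apply: CD => //; by rewrite ltn_divLR // -NM.
- move=> j jk; rewrite /Q !RN0 ?zsub_xx //.
  by rewrite prednK // (leq_ltn_trans _ jk).
- move=> i j iN jk; rewrite /Q -jk /=; apply: zsub_xx; apply: ltnW; apply: RN => //; by rewrite -jk.
- move=> j jk.
  have -> : iota 0 (N.+1) = iota 0 (P + M.+1) by rewrite addnS PM.
  rewrite count_split.
  apply: leq_trans (leq_addl _ _).
  rewrite (eq_in_count (a2 := fun i => C i j == 0)) ?CP1 //.
  move=> i; rewrite mem_iota add0n => /andP[_ iM].
  have kk : (k.-1).+1 = k by rewrite prednK // (leq_ltn_trans _ jk).
  have Cq : C i j * q < N by rewrite /N NM ltn_mul2r q0 CE.
  rewrite /Q /R ltnNge leq_addr /= addKn (CN2 i k.-1) // mul0n.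
  by rewrite /zsub subn0 modnDr modn_small // muln_eq0 (negbTE (lt0n_neq0 q0)) orbF.
- move=> j j' jk j'k jj' g gN.
  have jk1 : j < k by apply: ltnW.
  have jk2 : j' < k by apply: ltnW.
  rewrite /diff_count Rform //.
  have -> : iota 0 N = iota 0 (P + M) by rewrite PM.
  rewrite count_split RP prodC // dcaC //.
  case: (boolP (q %| g)) => qg /=.
    have gq : g %/ q < M by rewrite ltn_divLR // -NM.
    rewrite add0n (CP2 j j' jk j'k jj' _ gq).
    by rewrite -{2}(divnK qg) muln_eq0 (negbTE (lt0n_neq0 q0)) orbF.
  split => // _; apply/negP => /eqP g0; move: qg; by rewrite g0 dvdn0.
Qed.
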